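(* For every integer $n\ge0$, $$B^{(c)}_{n,\lambda}(x,y)=\sum_{m=0}^{n}\sum_{k=0}^{m}\sum_{l=0}^{\lfloor k/2\rfloor}\binom{n}{m}\binom{k}{2l}(-1)^l\lambda^{n-k}S_1(m,k)\,b_{n-m}\,B_{k-2l}(x)\,y^{2l}.$$ Furthermore, for every integer $n\ge1$, $$B^{(s)}_{n,\lambda}(x,y)=\sum_{m=0}^{n}\sum_{k=0}^{m}\sum_{l=0}^{\lfloor (k-1)/2\rfloor}\binom{n}{m}\binom{k}{2l+1}(-1)^l\lambda^{n-k}S_1(m,k)\,b_{n-m}\,B_{k-2l-1}(x)\,y^{2l+1},$$ where an inner sum with upper limit $-1$ is empty.
   Context: Let $\lambda$ be a nonzero real number; generating functions are formal power series in $t$. $e_\lambda^{x}(t)=(1+\lambda t)^{x/\lambda}$, $\cos_\lambda^{(y)}(t)=\cos\!\big(\tfrac{y}{\lambda}\log(1+\lambda t)\big)$, $\sin_\lambda^{(y)}(t)=\sin\!\big(\tfrac{y}{\lambda}\log(1+\lambda t)\big)$. The type 2 degenerate cosine-Bernoulli and sine-Bernoulli polynomials are defined by $\frac{t}{e_\lambda^{1/2}(t)-e_\lambda^{-1/2}(t)}e_\lambda^{x}(t)\cos_\lambda^{(y)}(t)=\sum_{n\ge0}B^{(c)}_{n,\lambda}(x,y)\frac{t^n}{n!}$ and the same with $\sin_\lambda^{(y)}(t)$ giving $B^{(s)}_{n,\lambda}(x,y)$. The (non-degenerate) type 2 Bernoulli polynomials are defined by $\frac{t}{e^{t/2}-e^{-t/2}}e^{xt}=\sum_{n\ge0}B_n(x)\frac{t^n}{n!}$.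 The Bernoulli numbers of the second kind $b_n$ are defined by $\frac{t}{\log(1+t)}=\sum_{n\ge0}b_n\frac{t^n}{n!}$. $S_1(n,k)$ are the signed Stirling numbers of the first kind, $\frac{1}{k!}(\log(1+t))^k=\sum_{n\ge k}S_1(n,k)\frac{t^n}{n!}$. *)

(* Defs.v *)
(* Formal power series in t over a real field R are
   represented by their coefficient sequences  nat -> R  (coefficient of t^n). *)
From HB Require Import structures.
From mathcomp Require Import all_boot all_order all_algebra.
Set Implicit Arguments. Unset Strict Implicit. Unset Printing Implicit Defensive.
Import Order.TTheory GRing.Theory Num.Theory.
Local Open Scope ring_scope.

Section FPS.
Variable R : realFieldType.
Definition fps := nat -> R.

Definition fps_one : fps := fun n => (n == 0%N)%:R.
Definition fps_scale (c : R) (f : fps) : fps := fun n => c * f n.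
Definition fps_sub (f g : fps) : fps := fun n => f n - g n.
Definition fps_mul (f g : fps) : fps :=
  fun n => \sum_(i < n.+1) f i * g (n - i)%N.
Definition fps_pow (f : fps) (k : nat) : fps := iter k (fps_mul f) fps_one.
(* composition a(L(t)) of the series a with a series L with L(0) = 0 *)
Definition fps_comp (a L : fps) : fps :=
  fun n => \sum_(k < n.+1) a k * fps_pow L k n.
(* f(t)/t, for f with f(0) = 0 *)
Definition fps_divt (f : fps) : fps := fun n => f n.+1.
(* multiplicative inverse of a series with nonzero constant term:
   g 0 = 1/f 0,  g (n+1) = -(1/f 0) * sum_{i=0}^{n} f (i+1) g (n-i) *)
Fixpoint fps_inv_aux (f : fps) (n : nat) : seq R :=
  match n with
  | 0 => [:: (f 0%N)^-1]
  | n'.+1 => let s := fps_inv_aux f n' in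
      rcons s (- (f 0%N)^-1 * \sum_(i < n'.+1) f i.+1 * nth 0 s (n' - i)%N)
  end.
Definition fps_inv (f : fps) : fps := fun n => nth 0 (fps_inv_aux f n) n.

Definition exp_coef : fps := fun k => (k`!%:R)^-1.
Definition cos_coef : fps :=
  fun k => if odd k then 0 else (-1) ^+ k./2 / k`!%:R.
Definition sin_coef : fps :=
  fun k => if odd k then (-1) ^+ k./2 / k`!%:R else 0.

(* log(1 + lam t) *)
Definition log1p (lam : R) : fps :=
  fun n => if n is n'.+1 then (-1) ^+ n' * lam ^+ n / n%:R else 0.

(* degenerate exponential e_lam^x(t) = (1+lam t)^{x/lam} = exp((x/lam) log(1+lam t)) *)
Definition dexp (lam x : R) : fps := fps_comp exp_coef (fps_scale (x / lam) (log1p lam)).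
Definition dcos (lam y : R) : fps := fps_comp cos_coef (fps_scale (y / lam) (log1p lam)).
Definition dsin (lam y : R) : fps := fps_comp sin_coef (fps_scale (y / lam) (log1p lam)).

(* t / (e_lam^{1/2}(t) - e_lam^{-1/2}(t)) *)
Definition dfactor (lam : R) : fps :=
  fps_inv (fps_divt (fps_sub (dexp lam (2^-1)) (dexp lam (- 2^-1)))).

Definition Bc (lam x y : R) (n : nat) : R :=
  n`!%:R * fps_mul (fps_mul (dfactor lam) (dexp lam x)) (dcos lam y) n.
Definition Bs (lam x y : R) (n : nat) : R :=
  n`!%:R * fps_mul (fps_mul (dfactor lam) (dexp lam x)) (dsin lam y) n.

Definition oexp (a : R) : fps := fun n => a ^+ n / n`!%:R.
(* type 2 Bernoulli polynomials: t/(e^{t/2}-e^{-t/2}) e^{xt} *)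
Definition B2 (n : nat) (x : R) : R :=
  n`!%:R * fps_mul (fps_inv (fps_divt (fps_sub (oexp (2^-1)) (oexp (- 2^-1))))) (oexp x) n.
(* Bernoulli numbers of the second kind: t / log(1+t) *)
Definition bsec (n : nat) : R := n`!%:R * fps_inv (fps_divt (log1p 1)) n.
(* signed Stirling numbers of the first kind: (log(1+t))^k / k! *)
Definition S1 (n k : nat) : R := n`!%:R * fps_pow (log1p 1) k n / k`!%:R.
End FPS.

(* Main.v *)
Require Import Defs.
From HB Require Import structures.
From mathcomp Require Import all_boot all_order all_algebra.
From mathcomp Require Import ring lra zify.
From Stdlib Require Import FunctionalExtensionality.
Set Implicit Arguments. Unset Strict Implicit. Unset Printing Implicit Defensive.
Import Order.TTheory GRing.Theory Num.Theory.
Local Open Scope ring_scope.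

Section Aux.
Variable R : realFieldType.
Implicit Types (f g : fps R) (p q r : {poly R}).

Definition low N p := forall n, (n < N)%N -> p`_n = 0.
Definition eqm N p q := low N (p - q).
Definition tr N f : {poly R} := \poly_(i < N) f i.

Lemma coef_tr N f n : (n < N)%N -> (tr N f)`_n = f n.
Proof. by move=> h; rewrite coef_poly h. Qed.

Lemma low0 p : low 0 p. Proof. by []. Qed.
Lemma lowW a b p : (b <= a)%N -> low a p -> low b p.
Proof. by move=> hb h n hn; apply: h; exact: leq_trans hn hb. Qed.
Lemma lowD N p q : low N p -> low N q -> low N (p + q).
Proof. by move=> hp hq n hn; rewrite coefD hp ?hq ?addr0. Qed.
Lemma lowN N p : low N p -> low N (- p).
Proof. by move=> hp n hn; rewrite coefN hp ?oppr0. Qed.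
Lemma lowM a b p q : low a p -> low b q -> low (a + b) (p * q).
Proof.
move=> hp hq n hn; rewrite coefM big1 // => [[i hi]] _ /=.
case: (ltnP i a) => hia; first by rewrite hp ?mul0r.
rewrite hq ?mulr0 //; rewrite ltn_subLR; last by rewrite -ltnS.
lia.
Qed.
Lemma lowZ N c p : low N p -> low N (c *: p).
Proof. by move=> hp n hn; rewrite coefZ hp ?mulr0. Qed.
Lemma low_sum N (I : finType) (F : I -> {poly R}) : (forall i, low N (F i)) -> low N (\sum_i F i).
Proof. by move=> h n hn; rewrite coef_sum big1 // => i _; apply: h. Qed.
Lemma low_pow q k : low 1 q -> low k (q ^+ k).
Proof.
move=> h; elim: k => [|k IH]; first exact: low0.
by rewrite exprS -add1n; apply: lowM.
Qed.
Lemma low_comp N p q : low N p -> low 1 q -> low N (p \Po q).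
Proof.
move=> hp hq; rewrite comp_polyE; apply: low_sum => i.
case: (ltnP i N) => hi; first by rewrite hp // scale0r; exact: low0 || (move=> n _; rewrite coef0).
by apply: lowZ; apply: (lowW hi); apply: low_pow.
Qed.

Lemma eqm_refl N p : eqm N p p. Proof. by move=> n _; rewrite subrr coef0. Qed.
Lemma eqm_sym N p q : eqm N p q -> eqm N q p.
Proof. by move=> h; rewrite /eqm -opprB; apply: lowN. Qed.
Lemma eqm_trans N p q r : eqm N p q -> eqm N q r -> eqm N p r.
Proof. by move=> h1 h2; rewrite /eqm -(subrKA q); apply: lowD. Qed.
Lemma eqm_coef N p q n : eqm N p q -> (n < N)%N -> p`_n = q`_n.
Proof. by move=> h hn; apply/eqP; rewrite -subr_eq0 -coefB h. Qed.
Lemma eqm_mul N p p' q q' : eqm N p p' -> eqm N q q' -> eqm N (p * q) (p' * q').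
Proof.
move=> h1 h2; rewrite /eqm.
have -> : p * q - p' * q' = (p - p') * q + p' * (q - q') by ring.
apply: lowD; first by rewrite -[N]addn0; apply: lowM.
by rewrite -[N]add0n; apply: lowM.
Qed.
Lemma eqm_comp N p p' q : eqm N p p' -> low 1 q -> eqm N (p \Po q) (p' \Po q).
Proof. by move=> h hq; rewrite /eqm -comp_polyB; apply: low_comp. Qed.

Lemma fps_mul_tr N f g n : (n < N)%N -> fps_mul f g n = (tr N f * tr N g)`_n.
Proof.
move=> hn; rewrite coefM /fps_mul; apply: eq_bigr => [[i hi]] _ /=.
rewrite !coef_tr //; first by rewrite (leq_ltn_trans (leq_subr _ _)).
by rewrite (leq_ltn_trans _ hn) // -ltnS.
Qed.
Lemma eqm_tr N f p : (forall n, (n < N)%N -> f n = p`_n) -> eqm N (tr N f) p.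
Proof. by move=> h n hn; rewrite coefB coef_tr // h // subrr. Qed.
Lemma tr_mul N f g : eqm N (tr N (fps_mul f g)) (tr N f * tr N g).
Proof. by apply: eqm_tr => n hn; apply: fps_mul_tr. Qed.
Lemma tr_pow N f k : eqm N (tr N (fps_pow f k)) (tr N f ^+ k).
Proof.
elim: k => [|k IH].
  apply: eqm_tr => n _; rewrite expr0 coefC /fps_pow /= /fps_one; by case: n.
change (eqm N (tr N (fps_mul f (fps_pow f k))) (tr N f ^+ k.+1)).
apply: (eqm_trans (tr_mul f (fps_pow f k))); rewrite exprS.
by apply: eqm_mul => //; apply: eqm_refl.
Qed.
Lemma low1_tr N f : f 0%N = 0 -> low 1 (tr N f).
Proof. by move=> h [|//] _; rewrite coef_poly; case: ifP. Qed.

Lemma fps_comp_tr N a f n : f 0%N = 0 -> (n < N)%N ->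
  fps_comp a f n = (tr N a \Po tr N f)`_n.
Proof.
move=> h0 hn.
have -> : tr N a \Po tr N f = \sum_(i < N) a i *: (tr N f) ^+ i.
  rewrite [tr N a]/tr poly_def raddf_sum; apply: eq_bigr => i _.
  by rewrite /= comp_polyZ rmorphXn /= comp_polyX.
rewrite coef_sum /fps_comp (big_ord_widen _ (fun i => a i * fps_pow f i n) hn).
rewrite big_mkcond; apply: eq_bigr => i _; rewrite coefZ.
case: ifP => hi.
  by rewrite -(eqm_coef (@tr_pow N f i) hn) coef_tr.

rewrite (low_pow (@low1_tr N f h0)) ?mulr0 //.
by rewrite ltnNge -ltnS hi.
Qed.

Lemma comp_mul a b f : f 0%N = 0 ->
  fps_comp (fps_mul a b) f = fps_mul (fps_comp a f) (fps_comp b f).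
Proof.
move=> h0; apply: functional_extensionality => n.
have hn : (n < n.+1)%N by [].
rewrite (fps_comp_tr _ h0 hn) (fps_mul_tr _ _ hn).
apply: eqm_coef hn.
apply: (eqm_trans (eqm_comp (tr_mul a b) (low1_tr _ h0))).
rewrite comp_polyM; apply: eqm_sym; apply: eqm_mul; apply: eqm_tr => m hm;
  exact: fps_comp_tr.
Qed.


Implicit Types (a b L H : fps R) (c : R).
Lemma fps_mulC f g : fps_mul f g = fps_mul g f.
Proof.
apply: functional_extensionality => n.
by rewrite !(@fps_mul_tr n.+1) // mulrC.
Qed.
Lemma fps_mulA f g (h : fps R) : fps_mul (fps_mul f g) h = fps_mul f (fps_mul g h).
Proof.
apply: functional_extensionality => n; have hn : (n < n.+1)%N by [].
rewrite !(fps_mul_tr _ _ hn).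
rewrite (eqm_coef (eqm_mul (tr_mul f g) (eqm_refl (tr n.+1 h))) hn).
rewrite (eqm_coef (eqm_mul (eqm_refl (tr n.+1 f)) (tr_mul g h)) hn).
by rewrite mulrA.
Qed.
Lemma fps_mul1 f : fps_mul f (fps_one R) = f.
Proof.
apply: functional_extensionality => n; have hn : (n < n.+1)%N by [].
rewrite (fps_mul_tr _ _ hn).
have -> : tr n.+1 (fps_one R) = 1.
  apply/polyP => i; rewrite coef_poly coefC /fps_one.
  case: i => [|i] /=; last by case: ifP. by [].
by rewrite mulr1 coef_tr.
Qed.
Lemma fps_1mul f : fps_mul (fps_one R) f = f.
Proof. by rewrite fps_mulC fps_mul1. Qed.

Lemma size_aux f n : size (fps_inv_aux f n) = n.+1.
Proof. by elim: n => [|n IH] //=; rewrite size_rcons IH. Qed.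
Lemma aux_nth f n i : (i <= n)%N -> nth 0 (fps_inv_aux f n) i = fps_inv f i.
Proof.
elim: n => [|n IH] hi; first by move: hi; rewrite leqn0 => /eqP ->.
case: (ltngtP i n.+1) => [hlt||->] //; last by rewrite ltnNge hi.
by rewrite /= nth_rcons size_aux hlt IH.
Qed.
Lemma inv_S f n : fps_inv f n.+1 =
  - (f 0%N)^-1 * \sum_(i < n.+1) f i.+1 * fps_inv f (n - i)%N.
Proof.
rewrite {1}/fps_inv /= nth_rcons size_aux ltnn eqxx; congr (_ * _).
by apply: eq_bigr => i _; rewrite aux_nth // leq_subr.
Qed.
Lemma mul_inv f : f 0%N != 0 -> fps_mul f (fps_inv f) = fps_one R.
Proof.
move=> h0; apply: functional_extensionality => [[|n]].
  by rewrite /fps_mul big_ord1 /fps_one /= mulfV.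
rewrite /fps_mul big_ord_recl subn0 inv_S /fps_one /=.
rewrite mulrA mulrN mulfV // mulN1r.
under [X in _ + X]eq_bigr => i _ do rewrite /bump /= add1n subSS.
by rewrite addNr.
Qed.
Lemma inv_unique f g : f 0%N != 0 -> fps_mul f g = fps_one R -> g = fps_inv f.
Proof.
move=> h0 h; rewrite -[g]fps_mul1 -(mul_inv h0) -fps_mulA (fps_mulC g) h.
by rewrite fps_1mul.
Qed.
Lemma mul0coef f g : fps_mul f g 0%N = f 0%N * g 0%N.
Proof. by rewrite /fps_mul big_ord1. Qed.
Lemma inv_mul f g : f 0%N != 0 -> g 0%N != 0 ->
  fps_inv (fps_mul f g) = fps_mul (fps_inv f) (fps_inv g).
Proof.
move=> hf hg; apply/esym/inv_unique; first by rewrite mul0coef mulf_neq0.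
rewrite fps_mulA -(fps_mulA g) (fps_mulC g) fps_mulA -fps_mulA.
by rewrite !mul_inv // fps_mul1.
Qed.

Definition dil (c : R) f : fps R := fun n => c ^+ n * f n.
Lemma dil_mul c f g : dil c (fps_mul f g) = fps_mul (dil c f) (dil c g).
Proof.
apply: functional_extensionality => n; rewrite /dil /fps_mul mulr_sumr.
apply: eq_bigr => [[i hi]] _ /=.
rewrite -{1}(subnKC (_ : (i <= n)%N)) // exprD; ring.
Qed.
Lemma dil_one c : dil c (fps_one R) = fps_one R.
Proof. by apply: functional_extensionality => -[|n]; rewrite /dil /fps_one /= ?mulr0 ?mulr1. Qed.
Lemma dil_inv c f : f 0%N != 0 -> dil c (fps_inv f) = fps_inv (dil c f).
Proof.
move=> h; apply: inv_unique; first by rewrite /dil expr0 mul1r.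
by rewrite -dil_mul mul_inv // dil_one.
Qed.
Lemma dil_pow c f k : fps_pow (dil c f) k = dil c (fps_pow f k).
Proof.
elim: k => [|k IH]; first by rewrite /fps_pow /= dil_one.
by rewrite /fps_pow /= -/(fps_pow _ k) IH dil_mul.
Qed.
Lemma scale_mul_l c f g : fps_mul (fps_scale c f) g = fps_scale c (fps_mul f g).
Proof.
apply: functional_extensionality => n; rewrite /fps_scale /fps_mul mulr_sumr.
by apply: eq_bigr => i _; rewrite mulrA.
Qed.
Lemma scale_mul_r c f g : fps_mul f (fps_scale c g) = fps_scale c (fps_mul f g).
Proof. by rewrite fps_mulC scale_mul_l fps_mulC. Qed.
Lemma scale_pow c f k : fps_pow (fps_scale c f) k = fps_scale (c ^+ k) (fps_pow f k).
Proof.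
elim: k => [|k IH].
  by apply: functional_extensionality => n; rewrite /fps_scale /fps_pow /= mul1r.
rewrite /fps_pow /= -!/(fps_pow _ k) IH scale_mul_l scale_mul_r.
by apply: functional_extensionality => n; rewrite /fps_scale exprS mulrA.
Qed.
Lemma comp_scaleR a c L :
  fps_comp a (fps_scale c L) = fps_comp (fun k => a k * c ^+ k) L.
Proof.
apply: functional_extensionality => n; rewrite /fps_comp.
by apply: eq_bigr => i _; rewrite scale_pow /fps_scale mulrA.
Qed.
Lemma comp_scaleL a c L : fps_comp (fps_scale c a) L = fps_scale c (fps_comp a L).
Proof.
apply: functional_extensionality => n; rewrite /fps_comp /fps_scale mulr_sumr.
by apply: eq_bigr => i _; rewrite mulrA.
Qed.
Lemma comp_sub a b L :
  fps_comp (fps_sub a b) L = fps_sub (fps_comp a L) (fps_comp b L).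
Proof.
apply: functional_extensionality => n; rewrite /fps_comp /fps_sub -sumrB.
by apply: eq_bigr => i _; rewrite mulrBl.
Qed.
Lemma comp_one L : fps_comp (fps_one R) L = fps_one R.
Proof.
apply: functional_extensionality => n; rewrite /fps_comp big_ord_recl big1.
  by rewrite addr0 /fps_one /= mul1r.
by move=> i _; rewrite /fps_one /= mul0r.
Qed.
Lemma comp0coef a L : fps_comp a L 0%N = a 0%N.
Proof. by rewrite /fps_comp big_ord1 /fps_pow /= /fps_one /= mulr1. Qed.
Lemma comp_inv a L : L 0%N = 0 -> a 0%N != 0 ->
  fps_comp (fps_inv a) L = fps_inv (fps_comp a L).
Proof.
move=> hL ha; apply: inv_unique; first by rewrite comp0coef.
by rewrite -comp_mul // mul_inv // comp_one.
Qed.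
Definition Xs : fps R := fun n => (n == 1%N)%:R.
Lemma comp_X L : L 0%N = 0 -> fps_comp Xs L = L.
Proof.
move=> h; apply: functional_extensionality => -[|n].
  by rewrite /fps_comp big_ord1 /Xs /= mul0r h.
rewrite /fps_comp big_ord_recl big_ord_recl big1.
  rewrite /Xs /= mul0r add0r mul1r addr0.
  by have := fps_mul1 L; rewrite /fps_pow /= => ->.
by move=> i _; rewrite /Xs /= mul0r.
Qed.
Lemma X_divt a : a 0%N = 0 -> a = fps_mul Xs (fps_divt a).
Proof.
move=> h; apply: functional_extensionality => -[|n].
  by rewrite /fps_mul big_ord1 /Xs /= mul0r h.
rewrite /fps_mul big_ord_recl big_ord_recl big1.
  by rewrite /Xs /= mul0r add0r mul1r addr0 /fps_divt subn1.
by move=> i _; rewrite /Xs /= mul0r.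
Qed.
Lemma divt_mul L H : L 0%N = 0 ->
  fps_divt (fps_mul L H) = fps_mul (fps_divt L) H.
Proof.
move=> h; apply: functional_extensionality => n.
rewrite /fps_divt /fps_mul big_ord_recl h mul0r add0r.
by apply: eq_bigr => i _.
Qed.
Lemma divt_comp a L : a 0%N = 0 -> L 0%N = 0 ->
  fps_divt (fps_comp a L) = fps_mul (fps_divt L) (fps_comp (fps_divt a) L).
Proof.
move=> ha hL; rewrite {1}(X_divt ha) comp_mul // comp_X // divt_mul //.
Qed.
End Aux.

Section S.
Variable R : realFieldType.
Lemma sum_even (F : nat -> R) k : \sum_(i < k.+1) (if odd i then 0 else F i)
  = \sum_(l < k./2.+1) F (2 * l)%N.
Proof.
elim: k => [|k IH]; first by rewrite !big_ord1.
rewrite big_ord_recr /= IH.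
have := odd_double_half k.
case hk: (odd k) => /= e.
  rewrite uphalf_half hk /= add1n [RHS]big_ord_recr /=; rewrite (_ : (2 * k./2.+1)%N = k.+1) //; lia.
by rewrite uphalf_half hk add0n addr0.
Qed.
Lemma sum_odd (F : nat -> R) k : \sum_(i < k.+1) (if odd i then F i else 0)
  = \sum_(l < k.+1./2) F (2 * l).+1.
Proof.
elim: k => [|k IH]; first by rewrite big_ord1 big_ord0.
rewrite big_ord_recr IH (_ : odd (@ord_max k.+1) = ~~ odd k) //.
rewrite (_ : k.+2./2 = (k./2).+1) // -uphalfE uphalf_half.
have := odd_double_half k.
case hk: (odd k) => e.
  by rewrite Monoid.mulm1 add1n.
rewrite add0n [RHS]big_ord_recr; rewrite (_ : (2 * k./2).+1 = k.+1)%N //; lia.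
Qed.
End S.

Section Main.
Variable R : realFieldType.
Variable lam : R.
Hypothesis hlam : lam != 0.
Local Notation V := (log1p lam).
Local Notation L1 := (log1p (1 : R)).
Local Notation d1 := (fps_divt L1).
Local Notation Dord := (fps_sub (oexp (2^-1 : R)) (oexp (- 2^-1))).
Local Notation iE := (fps_inv (fps_divt Dord)).
Definition cosy (y : R) : fps R := fun k => cos_coef R k * y ^+ k.
Definition siny (y : R) : fps R := fun k => sin_coef R k * y ^+ k.

Lemma V_dil : V = dil lam L1.
Proof.
apply: functional_extensionality => -[|n]; rewrite /dil /log1p ?mulr0 //.
by rewrite expr1n; ring.
Qed.
Lemma V0 : V 0%N = 0. Proof. by []. Qed.
Lemma comp_sdil (a : fps R) (z : R) :
  fps_comp a (fps_scale (z / lam) V) = fps_comp (dil lam^-1 (fun k => a k * z ^+ k)) V.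
Proof.
rewrite comp_scaleR; congr fps_comp; apply: functional_extensionality => k.
by rewrite /dil exprMn; ring.
Qed.
Lemma dexp_eq z : dexp lam z = fps_comp (dil lam^-1 (oexp z)) V.
Proof.
rewrite /dexp comp_sdil; congr (fps_comp (dil _ _) _).
by apply: functional_extensionality => k; rewrite /exp_coef /oexp mulrC.
Qed.
Lemma dcos_eq z : dcos lam z = fps_comp (dil lam^-1 (cosy z)) V.
Proof. by rewrite /dcos comp_sdil. Qed.
Lemma dsin_eq z : dsin lam z = fps_comp (dil lam^-1 (siny z)) V.
Proof. by rewrite /dsin comp_sdil. Qed.

Lemma E0 : fps_divt Dord 0%N = 1.
Proof. rewrite /fps_divt /fps_sub /oexp /= !expr1 (_ : 1`!%:R = 1 :> R) // !divr1 opprK. lra. Qed.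

Lemma dil_sub c (a b : fps R) : dil c (fps_sub a b) = fps_sub (dil c a) (dil c b).
Proof. by apply: functional_extensionality => n; rewrite /dil /fps_sub mulrBr. Qed.
Lemma divt_dil c (a : fps R) : fps_divt (dil c a) = fps_scale c (dil c (fps_divt a)).
Proof. by apply: functional_extensionality => n; rewrite /dil /fps_scale /fps_divt exprS mulrA. Qed.
Lemma d10 : d1 0%N = 1.
Proof. by rewrite /fps_divt /log1p /= expr0 expr1 mul1r divr1. Qed.
Lemma scaleV : fps_scale lam^-1 (fps_divt V) = dil lam d1.
Proof.
apply: functional_extensionality => n.
by rewrite V_dil /fps_scale /fps_divt /dil exprS !mulrA mulVf // mul1r.
Qed.
Lemma dfactor_eq : dfactor lam =
  fps_mul (dil lam (fps_inv d1)) (fps_comp (dil lam^-1 iE) V).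
Proof.
rewrite /dfactor !dexp_eq -comp_sub -dil_sub divt_comp //; last first.
  by rewrite /dil /fps_sub /oexp !expr0 subrr mulr0.
rewrite divt_dil comp_scaleL scale_mul_r -scale_mul_l scaleV.
have hE : dil lam^-1 (fps_divt Dord) 0%N != 0 by rewrite /dil expr0 mul1r E0 oner_neq0.
rewrite inv_mul; last by rewrite comp0coef.
  rewrite dil_inv; last by rewrite d10 oner_neq0.
  by rewrite -comp_inv // dil_inv // E0 oner_neq0.
by rewrite /dil expr0 mul1r d10 oner_neq0.
Qed.
Lemma key x (F : fps R) :
  fps_mul (fps_mul (dfactor lam) (dexp lam x)) (fps_comp (dil lam^-1 F) V) =
  fps_mul (fps_comp (dil lam^-1 (fps_mul (fps_mul iE (oexp x)) F)) V)
          (dil lam (fps_inv d1)).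
Proof.
rewrite dfactor_eq dexp_eq !dil_mul !comp_mul //.
by rewrite [RHS]fps_mulC !fps_mulA.
Qed.

Lemma fact_neq0 n : (n`!%:R : R) != 0.
Proof. by rewrite pnatr_eq0 -lt0n fact_gt0. Qed.
Lemma fps_mulE (f g : fps R) n : fps_mul f g n = \sum_(i < n.+1) f i * g (n - i)%N.
Proof. by []. Qed.
Lemma coefW j : dil lam (fps_inv d1) j = lam ^+ j * (bsec R j / j`!%:R).
Proof. by rewrite /dil /bsec [_`!%:R * _]mulrC mulfK // fact_neq0. Qed.
Lemma coefC m G : fps_comp (dil lam^-1 G) V m =
  \sum_(k < m.+1) lam^-1 ^+ k * G k * (lam ^+ m * (S1 R m k * k`!%:R / m`!%:R)).
Proof.
rewrite /fps_comp; apply: eq_bigr => k _.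
rewrite V_dil dil_pow /dil /S1.
by field; rewrite !fact_neq0.
Qed.
Lemma Ptrm j x : fps_mul iE (oexp x) j = B2 j x / j`!%:R.
Proof. by rewrite /B2 [_`!%:R * _]mulrC mulfK // fact_neq0. Qed.
Lemma Gcos x y k : fps_mul (fps_mul iE (oexp x)) (cosy y) k =
  \sum_(l < k./2.+1) ((-1) ^+ l / (2 * l)`!%:R * y ^+ (2 * l)) *
     (B2 (k - 2 * l) x / (k - 2 * l)`!%:R).
Proof.
rewrite fps_mulC fps_mulE.
pose F := fun i : nat => ((-1) ^+ i./2 / i`!%:R * y ^+ i) * (B2 (k - i) x / (k - i)`!%:R).
transitivity (\sum_(i < k.+1) (if odd i then 0 else F i)).
  apply: eq_bigr => i _; rewrite /cosy /cos_coef Ptrm.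
  by case: (odd i); rewrite ?mul0r.
rewrite (sum_even F); apply: eq_bigr => l _.
by rewrite /F (_ : (2 * l)./2 = l) // mul2n doubleK.
Qed.
Lemma Gsin x y k : fps_mul (fps_mul iE (oexp x)) (siny y) k =
  \sum_(l < k.+1./2) ((-1) ^+ l / (2 * l).+1`!%:R * y ^+ (2 * l).+1) *
     (B2 (k - (2 * l).+1) x / (k - (2 * l).+1)`!%:R).
Proof.
rewrite fps_mulC fps_mulE.
pose F := fun i : nat => ((-1) ^+ i./2 / i`!%:R * y ^+ i) * (B2 (k - i) x / (k - i)`!%:R).
transitivity (\sum_(i < k.+1) (if odd i then F i else 0)).
  apply: eq_bigr => i _; rewrite /siny /sin_coef Ptrm.
  by case: (odd i); rewrite ?mul0r.
rewrite (sum_odd F); apply: eq_bigr => l _.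
by rewrite /F (_ : (2 * l).+1./2 = l) // mul2n /= uphalf_double.
Qed.
Lemma binR i j : (j <= i)%N -> ('C(i, j)%:R : R) = i`!%:R / (j`!%:R * (i - j)`!%:R).
Proof.
move=> h; rewrite -(bin_fact h) !natrM mulfK //.
by rewrite mulf_neq0 // fact_neq0.
Qed.
Lemma lampow n m k : (k <= m)%N -> (m <= n)%N ->
  lam ^+ (n - k) = lam ^+ (n - m) * lam ^+ m / lam ^+ k.
Proof.
move=> h1 h2; rewrite -exprD subnK // -{2}(subnK (leq_trans h1 h2)) exprD mulfK //.
by rewrite expf_neq0.
Qed.

Lemma cos_part x y n : Bc lam x y n =
    \sum_(m < n.+1) \sum_(k < m.+1) \sum_(l < k./2.+1)
      'C(n, m)%:R * 'C(k, 2 * l)%:R * (-1) ^+ l * lam ^+ (n - k)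
      * S1 R m k * bsec R (n - m) * B2 (k - 2 * l) x * y ^+ (2 * l).
Proof.
rewrite /Bc dcos_eq key fps_mulE mulr_sumr; apply: eq_bigr => [[m hm]] _ /=.
rewrite coefC coefW mulr_suml mulr_sumr; apply: eq_bigr => [[k hk]] _ /=.
rewrite Gcos !(mulr_suml, mulr_sumr); apply: eq_bigr => [[l hl]] _ /=.
have hkm : (k <= m)%N by [].
have hmn : (m <= n)%N by [].
have hlk : (2 * l <= k)%N.
  by move: hl; rewrite ltnS -(leq_pmul2l (_ : 0 < 2)%N) // => /leq_trans; apply; rewrite mul2n halfK leq_subr.
rewrite (binR hmn) (binR hlk) (lampow hkm hmn) exprVn.
field.
by rewrite !fact_neq0 !expf_neq0.
Qed.

Lemma sin_part x y n : Bs lam x y n =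
    \sum_(m < n.+1) \sum_(k < m.+1) \sum_(l < k.+1./2)
      'C(n, m)%:R * 'C(k, (2 * l).+1)%:R * (-1) ^+ l * lam ^+ (n - k)
      * S1 R m k * bsec R (n - m) * B2 (k - (2 * l).+1) x * y ^+ (2 * l).+1.
Proof.
rewrite /Bs dsin_eq key fps_mulE mulr_sumr; apply: eq_bigr => [[m hm]] _ /=.
rewrite coefC coefW mulr_suml mulr_sumr; apply: eq_bigr => [[k hk]] _ /=.
rewrite Gsin !(mulr_suml, mulr_sumr); apply: eq_bigr => [[l hl]] _ /=.
have hkm : (k <= m)%N by [].
have hmn : (m <= n)%N by [].
have hlk : ((2 * l).+1 <= k)%N.
  by move: hl; rewrite -uphalfE gtn_uphalf_double mul2n.
rewrite (binR hmn) (binR hlk) (lampow hkm hmn) exprVn.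
field.
by rewrite !fact_neq0 !expf_neq0.
Qed.
End Main.

Theorem theorem2p6 (R : realFieldType) (lam x y : R) (hlam : lam != 0) :
  (forall n : nat,
    Bc lam x y n =
    \sum_(m < n.+1) \sum_(k < m.+1) \sum_(l < k./2.+1)
      'C(n, m)%:R * 'C(k, 2 * l)%:R * (-1) ^+ l * lam ^+ (n - k)
      * S1 R m k * bsec R (n - m) * B2 (k - 2 * l) x * y ^+ (2 * l))
  /\
  (forall n : nat, (1 <= n)%N ->
    Bs lam x y n =
    \sum_(m < n.+1) \sum_(k < m.+1) \sum_(l < k.+1./2)
      'C(n, m)%:R * 'C(k, (2 * l).+1)%:R * (-1) ^+ l * lam ^+ (n - k)
      * S1 R m k * bsec R (n - m) * B2 (k - (2 * l).+1) x * y ^+ (2 * l).+1).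
Proof.
split=> [n|n _]; [exact: cos_part | exact: sin_part].
Qed.
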